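(* Let $\mathcal{C}\subseteq\mathbb{N}^p$ be an integer cone, $\preceq$ a monomial order on $\mathbb{N}^p$, and $S$ a $\mathcal{C}$-semigroup with $S\neq\mathcal{C}$. Then $g(S)\le t(S)\,n(S)$.
   Context: An integer cone $\mathcal{C}\subseteq\mathbb{N}^p$ is the set of integer points of a rational cone in $\mathbb{Q}_{\ge 0}^p$ spanned by finitely many rational half-lines from the origin (assumed finitely generated). A $\mathcal{C}$-semigroup is a subset $S\subseteq\mathcal{C}$ containing $0$, closed under addition, with $\mathcal{C}\setminus S$ finite. The gap set is $\mathcal{H}(S)=\mathcal{C}\setminus S$ and the genus is $g(S)=\#\mathcal{H}(S)$. A monomial order $\preceq$ on $\mathbb{N}^p$ is a total order such that $\mathbf a\preceq\mathbf b$ implies $\mathbf a+\mathbf c\preceq\mathbf b+\mathbf c$ for all $\mathbf c\in\mathbb{N}^p$, and $\mathbf 0\preceq\mathbf c$ for all $\mathbf c$. The Frobenius vector is $F(S)=\max_{\preceq}\mathcal{H}(S)$. The set of pseudo-Frobenius elements is $\mathrm{PF}(S)=\{\mathbf x\in\mathcal{H}(S)\mid \mathbf x+(S\setminus\{0\})\subseteq S\}$ and the type is $t(S)=\#\mathrm{PF}(S)$. Finally $n(S)=\#\{\mathbf x\in S\mid \mathbf x\preceq F(S)\}$. *)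

(* Defs.v *)
From mathcomp Require Import all_boot all_order all_algebra.
Set Implicit Arguments. Unset Strict Implicit. Unset Printing Implicit Defensive.
Import Order.TTheory GRing.Theory Num.Theory.

Definition vec (p : nat) := {ffun 'I_p -> nat}.

Definition vzero (p : nat) : vec p := [ffun _ => 0%N].
Definition vadd (p : nat) (a b : vec p) : vec p := [ffun i => (a i + b i)%N].

Definition vset (p : nat) := vec p -> Prop.

Definition has_card (T : eqType) (A : T -> Prop) (n : nat) : Prop :=
  exists s : seq T, uniq s /\ (forall x, x \in s <-> A x) /\ size s = n.

Definition finite_set (T : eqType) (A : T -> Prop) : Prop :=
  exists s : seq T, forall x, A x -> x \in s.

Definition is_integer_cone (p : nat) (C : vset p) : Prop :=
  exists (k : nat) (V : 'I_k -> 'I_p -> rat),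
    (forall i j, 0 <= V i j)%R /\
    forall x : vec p, C x <->
      exists lam : 'I_k -> rat, (forall i, 0 <= lam i)%R /\
        forall j : 'I_p, ((x j)%:R = \sum_(i < k) lam i * V i j)%R.

Definition monomial_order (p : nat) (le : vec p -> vec p -> Prop) : Prop :=
  (forall a, le a a) /\
  (forall a b, le a b -> le b a -> a = b) /\
  (forall a b c, le a b -> le b c -> le a c) /\
  (forall a b, le a b \/ le b a) /\
  (forall a b c, le a b -> le (vadd a c) (vadd b c)) /\
  (forall c, le (vzero p) c).

Definition gaps (p : nat) (C S : vset p) : vset p := fun x => C x /\ ~ S x.

Definition is_C_semigroup (p : nat) (C S : vset p) : Prop :=
  (forall x, S x -> C x) /\
  S (vzero p) /\
  (forall a b, S a -> S b -> S (vadd a b)) /\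
  finite_set (gaps C S).

Definition is_frobenius (p : nat) (le : vec p -> vec p -> Prop) (C S : vset p)
  (F : vec p) : Prop :=
  gaps C S F /\ forall x, gaps C S x -> le x F.

Definition pseudo_frobenius (p : nat) (C S : vset p) : vset p := fun x =>
  gaps C S x /\ forall s, S s -> s <> vzero p -> S (vadd x s).

Definition below_frob (p : nat) (le : vec p -> vec p -> Prop) (S : vset p)
  (F : vec p) : vset p := fun x => S x /\ le x F.

(* Main.v *)
Require Import Defs.
From mathcomp Require Import all_boot all_order all_algebra.
From Stdlib Require Import Classical.
From mathcomp Require Import zify.
Import Order.TTheory GRing.Theory Num.Theory.
Set Implicit Arguments. Unset Strict Implicit. Unset Printing Implicit Defensive.

Definition vsub (p : nat) (a b : vec p) : vec p := [ffun i => (a i - b i)%N].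
Definition wt (p : nat) (a : vec p) : nat := (\sum_(i < p) a i)%N.

Lemma vaddA p (a b c : vec p) : vadd (vadd a b) c = vadd a (vadd b c).
Proof. apply/ffunP=> i; by rewrite !ffunE addnA. Qed.

Lemma vaddC p (a b : vec p) : vadd a b = vadd b a.
Proof. apply/ffunP=> i; by rewrite !ffunE addnC. Qed.

Lemma vadd0 p (a : vec p) : vadd (vzero p) a = a.
Proof. apply/ffunP=> i; by rewrite !ffunE add0n. Qed.

Lemma vsubK p (a b : vec p) : vsub (vadd a b) b = a.
Proof. apply/ffunP=> i; by rewrite !ffunE addnK. Qed.

Lemma wtD p (a b : vec p) : wt (vadd a b) = (wt a + wt b)%N.
Proof. rewrite /wt -big_split /=; apply: eq_bigr => i _; by rewrite ffunE. Qed.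

Lemma wt_pos p (a : vec p) : a <> vzero p -> (0 < wt a)%N.
Proof.
move=> ha; rewrite lt0n; apply/negP => /eqP h; apply: ha.
have := h; rewrite /wt => /eqP; rewrite sum_nat_eq0 => /forallP H.
apply/ffunP => i; rewrite ffunE; exact/eqP/(H i).
Qed.

Lemma cone_add p (C : vset p) : is_integer_cone C ->
  forall x y, C x -> C y -> C (vadd x y).
Proof.
move=> [k [V [HV HC]]] x y /HC [l1 [H1 E1]] /HC [l2 [H2 E2]].
apply/HC; exists (fun i => l1 i + l2 i)%R; split.
  by move=> i; rewrite addr_ge0.
move=> j; rewrite ffunE natrD E1 E2 -big_split /=.
by apply: eq_bigr => i _; rewrite mulrDl.
Qed.

Theorem mainTheorem1 (p : nat) (C : vset p) (le : vec p -> vec p -> Prop)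
  (S : vset p) (F : vec p) (g t n : nat) :
  is_integer_cone C ->
  monomial_order le ->
  is_C_semigroup C S ->
  (exists x, C x /\ ~ S x) ->
  is_frobenius le C S F ->
  has_card (gaps C S) g ->
  has_card (pseudo_frobenius C S) t ->
  has_card (below_frob le S F) n ->
  (g <= t * n)%N.
Proof.
move=> hC [lrefl [lanti [ltrans [ltot [lmono l0]]]]] [SC [S0 [Sadd _]]] _
  [FG Fmax] [gl [gu [gP gs]]] [tl [tu [tP ts]]] [nl [nu [nP ns]]].
set B := (\max_(x <- gl) wt x)%N.
have wtB : forall y, gaps C S y -> (wt y <= B)%N.
  by move=> y /gP hy; apply: leq_bigmax_seq.
have key : forall k y, (B - wt y <= k)%N -> gaps C S y ->
    forall h s, S s -> y = vadd h s ->
    exists s', S s' /\ pseudo_frobenius C S (vadd h s').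
  elim=> [|k IH] y hk hy h s hs ey.
  - exists s; split => //; rewrite -ey; split => // s' hs' hs0.
    apply: NNPP => hn.
    have hg : gaps C S (vadd y s') by split => //; apply: cone_add => //; [case: hy | apply: SC].
    have := wtB _ hg; rewrite wtD; have := wt_pos hs0; move: hk; lia.
  - apply: NNPP => hne.
    have hnp : ~ pseudo_frobenius C S y.
      by move=> hp; apply: hne; exists s; split => //; rewrite -ey.
    have [s' [hs' [hs0 hn]]] : exists s', S s' /\ s' <> vzero p /\ ~ S (vadd y s').
      apply: NNPP => H; apply: hnp; split => // s' hs' hs0.
      apply: NNPP => hn; apply: H; exists s'; by [].
    have hg : gaps C S (vadd y s') by split => //; apply: cone_add => //; [case: hy | apply: SC].
    apply: hne; have hk' : (B - wt (vadd y s') <= k)%N.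
      rewrite wtD; have := wt_pos hs0; have := wtB _ hg; rewrite wtD; move: hk; lia.
    apply: (IH (vadd y s') hk' hg h (vadd s s') (Sadd _ _ hs hs')).
    by rewrite ey vaddA.
rewrite -gs -ts -ns -(size_allpairs (@vsub p)).
apply: (uniq_leq_size (s2 := [seq vsub f s | f <- tl, s <- nl]) gu) => h /gP hh.
have [s [hs [hpf hpf2]]] := key _ h (leqnn _) hh h (vzero p) S0 ltac:(by rewrite vaddC vadd0).
rewrite -(vsubK h s); apply: allpairs_f; first exact/tP.
apply/nP; split => //.
apply: (ltrans _ (vadd h s)); last by apply: Fmax; case: hpf.
have := lmono _ _ s (l0 h); by rewrite vadd0.
Qed.
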